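(* Let $\alpha>0$, $t_0>0$ and $x_0,v_0\in\mathcal H$. Assume $(u(\cdot),v(\cdot)):[t_0,+\infty)\to\mathcal H\times\mathcal H$ is absolutely continuous on every compact subinterval and solves the differential inclusion $$(\dot u(t),\dot v(t))\in G(t,u(t),v(t))\ \text{ for almost all }t>t_0,\qquad (u(t_0),v(t_0))=(x_0,v_0),$$ where $G(t,u,v)=\{v\}\times\big(-\frac{\alpha}{t}v-\arg\min_{g\in C(u)}\langle g,-v\rangle\big)$. Then $x(t):=u(t)$ satisfies $$\tfrac{\alpha}{t}\dot x(t)+\operatorname{proj}_{C(x(t))+\ddot x(t)}(0)=0$$ for almost all $t\in[t_0,+\infty)$, where $\dot x=v$ and $\ddot x=\dot v$, together with $x(t_0)=x_0$ and $\dot x(t_0)=v_0$.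
   Context: $\mathcal H$ is a real Hilbert space. $f_1,\dots,f_m:\mathcal H\to\mathbb R$ are convex and continuously differentiable. $C(u)=\operatorname{co}\{\nabla f_i(u):i=1,\dots,m\}$. For a closed convex $K$, $\operatorname{proj}_K(y)=\arg\min_{w\in K}\|w-y\|^2$. *)

(* Defs.v *)
From HB Require Import structures.
From mathcomp Require Import all_boot all_order all_algebra.
From mathcomp Require Import all_classical all_reals all_analysis.
Set Implicit Arguments. Unset Strict Implicit. Unset Printing Implicit Defensive.
Import Order.TTheory GRing.Theory Num.Theory.
Import numFieldNormedType.Exports.
Local Open Scope classical_set_scope.
Local Open Scope ring_scope.

(* A real Hilbert space: a complete normed space over R whose norm is induced
   by a (bilinear, symmetric) inner product [ip]. *)
Definition is_inner_product {R : realType} {H : completeNormedModType R}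
  (ip : H -> H -> R) : Prop :=
  [/\ (forall x y, ip x y = ip y x),
      (forall a x y z, ip (a *: x + y) z = a * ip x z + ip y z) &
      (forall x, ip x x = `|x| ^+ 2)].

Definition convex_fun {R : realType} {H : completeNormedModType R}
  (f : H -> R) : Prop :=
  forall (x y : H) (l : R), 0 <= l <= 1 ->
    f (l *: x + (1 - l) *: y) <= l * f x + (1 - l) * f y.

Definition is_C1_gradient {R : realType} {H : completeNormedModType R}
  (ip : H -> H -> R) (f : H -> R) (g : H -> H) : Prop :=
  (forall x, differentiable f x /\ forall h, 'd f x h = ip (g x) h)
  /\ continuous g.

Definition co_fin {R : realType} {H : completeNormedModType R} {m : nat}
  (p : 'I_m -> H) : set H :=
  [set y | exists lam : 'I_m -> R, (forall i, 0 <= lam i) /\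
     \sum_(i < m) lam i = 1 /\ y = \sum_(i < m) lam i *: p i].

Definition Cset {R : realType} {H : completeNormedModType R} {m : nat}
  (grad : 'I_m -> H -> H) (u : H) : set H := co_fin (fun i => grad i u).

Definition argmin {R : realType} {T : Type} (K : set T) (phi : T -> R) : set T :=
  [set w | K w /\ forall w', K w' -> phi w <= phi w'].

(* proj_K(y) = arg min_{w in K} ||w - y||^2 (a chosen element of the argmin set;
   for nonempty closed convex K it is the unique minimizer). *)
Definition proj_onto {R : realType} {H : completeNormedModType R}
  (K : set H) (y : H) : H := xget 0 (argmin K (fun w => `|w - y| ^+ 2)).

Definition translate {R : realType} {H : completeNormedModType R}
  (K : set H) (w : H) : set H := [set c + w | c in K].

Definition abs_cont_on {R : realType} {H : completeNormedModType R}
  (f : R -> H) (a b : R) : Prop :=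
  forall eps : R, 0 < eps -> exists2 delta : R, 0 < delta &
    forall (n : nat) (s e : nat -> R),
      (forall k, (k < n)%N -> a <= s k /\ s k <= e k /\ e k <= b) ->
      (forall k, (k.+1 < n)%N -> e k <= s k.+1) ->
      \sum_(k < n) (e k - s k) < delta ->
      \sum_(k < n) `|f (e k) - f (s k)| < eps.

Definition loc_abs_cont {R : realType} {H : completeNormedModType R}
  (f : R -> H) (t0 : R) : Prop :=
  forall a b, t0 <= a -> a <= b -> abs_cont_on f a b.

Definition Gsecond {R : realType} {H : completeNormedModType R} {m : nat}
  (ip : H -> H -> R) (grad : 'I_m -> H -> H) (alpha t : R) (u v : H) : set H :=
  [set - ((alpha / t) *: v) - g | g in argmin (Cset grad u) (fun g => ip g (- v))].

(* Main.v *)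
Require Import Defs.
From HB Require Import structures.
From mathcomp Require Import all_boot all_order all_algebra.
From mathcomp Require Import all_classical all_reals all_analysis.
From mathcomp Require Import ring lra.
Import Order.TTheory GRing.Theory Num.Theory.
Import numFieldNormedType.Exports.
Local Open Scope classical_set_scope.
Local Open Scope ring_scope.

Section Key.
Variables (R : realType) (H : completeNormedModType R) (ip : H -> H -> R).
Hypothesis hip : is_inner_product ip.

Lemma ip0l z : ip 0 z = 0.
Proof.
case: hip => _ hl _; have := hl 1 0 0 z; rewrite scaler0 addr0 mul1r.
by move/(congr1 (fun t => t - ip 0 z)); rewrite addrK subrr.
Qed.

Lemma ipDl x y z : ip (x + y) z = ip x z + ip y z.
Proof. case: hip => _ hl _; by rewrite -[x]scale1r hl mul1r scale1r. Qed.

Lemma ipZl a x z : ip (a *: x) z = a * ip x z.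
Proof. case: hip => _ hl _; by rewrite -[a *: x]addr0 hl ip0l addr0. Qed.

Lemma ipNl x z : ip (- x) z = - ip x z.
Proof. by rewrite -scaleN1r ipZl mulN1r. Qed.

Lemma ipBl x y z : ip (x - y) z = ip x z - ip y z.
Proof. by rewrite ipDl ipNl. Qed.

Lemma ipC x y : ip x y = ip y x.
Proof. by case: hip. Qed.

Lemma ipDr x y z : ip z (x + y) = ip z x + ip z y.
Proof. by rewrite ipC ipDl !(ipC z). Qed.

Lemma ipsq x : `|x| ^+ 2 = ip x x.
Proof. by case: hip => _ _ ->. Qed.

Lemma sq_expand d e : `|d + e| ^+ 2 = `|d| ^+ 2 + 2 * ip d e + `|e| ^+ 2.
Proof.
rewrite !ipsq ipDl !ipDr (ipC e d). ring.
Qed.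

Lemma key_proj (C : set H) (a : R) (v w g : H) :
  0 < a -> C g -> (forall c, C c -> ip g (- v) <= ip c (- v)) ->
  w = - (a *: v) - g ->
  proj_onto (translate C w) 0 = - (a *: v).
Proof.
move=> a0 Cg gmin ->.
set e := - (a *: v).
have ge : g + (e - g) = e by rewrite addrC subrK.
have expand : forall c, C c ->
   `|c + (e - g) - 0| ^+ 2 = `|c - g| ^+ 2 + 2 * (a * (ip c (- v) - ip g (- v))) + `|e| ^+ 2.
  move=> c Cc; rewrite subr0.
  have -> : c + (e - g) = (c - g) + e by rewrite addrA addrAC.
  by rewrite sq_expand /e -scalerN ipC ipZl (ipC (- v)) ipBl.
have pos : forall c, C c -> 0 <= 2 * (a * (ip c (- v) - ip g (- v))).
  move=> c Cc; apply: mulr_ge0 => //; apply: mulr_ge0; first exact: ltW.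
  by rewrite subr_ge0; exact: gmin.
apply: xget_unique.
  split; first by exists g.
  move=> _ [c Cc <-]; rewrite expand // subr0.
  rewrite lerDr; apply: addr_ge0; [exact: sqr_ge0 | exact: pos].
move=> _ [[c Cc <-] hmin].
have := hmin _ (ex_intro2 _ _ g Cg erefl).
rewrite (expand c Cc) (expand g Cg) subrr normr0 expr0n /= subrr !mulr0.
rewrite !add0r => hle.
have p1 := pos c Cc; have p2 := sqr_ge0 `|c - g|.
have h1 : `|c - g| ^+ 2 = 0 by lra.
move/eqP: h1; rewrite expf_eq0 /= normr_eq0 subr_eq0 => /eqP ->.
exact: ge.
Qed.
End Key.

Theorem theorem3p9 (R : realType) (H : completeNormedModType R)
  (ip : H -> H -> R) (m : nat) (f : 'I_m -> H -> R) (grad : 'I_m -> H -> H)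
  (alpha t0 : R) (x0 v0 : H) (u v : R -> H) :
  is_inner_product ip ->
  (forall i, convex_fun (f i) /\ is_C1_gradient ip (f i) (grad i)) ->
  0 < alpha -> 0 < t0 ->
  loc_abs_cont u t0 -> loc_abs_cont v t0 ->
  (\forall t \ae (@lebesgue_measure R), t0 < t ->
     [/\ derivable u t 1, derivable v t 1, derive1 u t = v t &
         Gsecond ip grad alpha t (u t) (v t) (derive1 v t)]) ->
  u t0 = x0 -> v t0 = v0 ->
  [/\ u t0 = x0, v t0 = v0 &
    \forall t \ae (@lebesgue_measure R), t0 <= t ->
      [/\ derivable u t 1, derive1 u t = v t, derivable v t 1 &
          (alpha / t) *: derive1 u t
            + proj_onto (translate (Cset grad (u t)) (derive1 v t)) 0 = 0]].
Proof.
move=> hip _ a0 t00 _ _ hae hu hv; split => //.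
have hne : \forall t \ae (@lebesgue_measure R), t != t0.
  exists [set t0]; split; first exact: measurable_set1.
    exact: lebesgue_measure_set1.
  by move=> t /= /negP; rewrite negbK => /eqP.
apply: (filterS2 (F := almost_everywhere (@lebesgue_measure R)) _ _ hne hae) => t ne h le.
have lt : t0 < t by rewrite lt_neqAle eq_sym ne le.
have [du dv eq [g [Cg gmin] gw]] := h lt.
have t0' : 0 < t by apply: lt_trans lt.
split => //.
rewrite (@key_proj R H ip hip _ (alpha / t) (v t) _ g) //.
- by rewrite eq subrr.
- exact: divr_gt0.
Qed.
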